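(* Let $q$ be a nonzero real number with $q\neq-1$, and for $k\ge0$ let $$A_k=\begin{pmatrix} x & q^k(x^2+s)\\ 1 & q^kx\end{pmatrix}.$$ Then for every $n\ge1$, $$\begin{pmatrix} T_n(x,s,q) & (x^2+s)U_{n-1}(x,qs,q)\\ U_{n-1}(x,s,q) & T_n\!\left(x,\frac{s}{q},q\right)\end{pmatrix}=A_{n-1}A_{n-2}\cdots A_0.$$
   Context: $T_0=1$, $T_1=x$, $T_n(x,s,q)=(1+q^{n-1})x\,T_{n-1}(x,s,q)+q^{n-1}s\,T_{n-2}(x,s,q)$ for $n\ge2$; $U_{-1}=0$, $U_0=1$, $U_n(x,s,q)=(1+q^{n})x\,U_{n-1}(x,s,q)+q^{n-1}s\,U_{n-2}(x,s,q)$ for $n\ge1$. *)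

(* Defs.v *)
From HB Require Import structures.
From mathcomp Require Import all_boot all_order all_algebra.
Set Implicit Arguments. Unset Strict Implicit. Unset Printing Implicit Defensive.
Import Order.TTheory GRing.Theory Num.Theory.
Local Open Scope ring_scope.

Fixpoint Tpoly (R : nzRingType) (x s q : R) (n : nat) : R :=
  match n with
  | 0%N => 1
  | 1%N => x
  | (m.+1 as m1).+1 =>
      (1 + q ^+ m1) * x * Tpoly x s q m1 + q ^+ m1 * s * Tpoly x s q m
  end.

(* U_{-1} = 0, U_0 = 1, U_n = (1+q^n) x U_{n-1} + q^(n-1) s U_{n-2}  (n >= 1);
   defined here for n >= 0, with the value U_{-1} = 0 used at n = 1. *)
Fixpoint Upoly (R : nzRingType) (x s q : R) (n : nat) : R :=
  match n with
  | 0%N => 1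
  | 1%N => (1 + q) * x * 1 + q ^+ 0 * s * 0
  | (m.+1 as m1).+1 =>
      (1 + q ^+ m1.+1) * x * Upoly x s q m1 + q ^+ m1 * s * Upoly x s q m
  end.

Definition mx2 (R : nzRingType) (a b c d : R) : 'M[R]_2 :=
  \matrix_(i < 2, j < 2)
    if (i == 0 :> nat) then (if (j == 0 :> nat) then a else b)
    else (if (j == 0 :> nat) then c else d).

Definition Amx (R : nzRingType) (x s q : R) (k : nat) : 'M[R]_2 :=
  mx2 x (q ^+ k * (x ^+ 2 + s)) 1 (q ^+ k * x).

(* Main.v *)
Require Import Defs.
From HB Require Import structures.
From mathcomp Require Import all_boot all_order all_algebra.
From mathcomp Require Import ring.
Import Order.TTheory GRing.Theory Num.Theory.
Local Open Scope ring_scope.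

Lemma steps (R : realFieldType) (q x s : R) (k : nat) : q != 0 ->
  Tpoly x s q k.+2 = x * Tpoly x s q k.+1 + q ^+ k.+1 * (x ^+ 2 + s) * Upoly x s q k /\
  Upoly x s q k.+1 = Tpoly x s q k.+1 + q ^+ k.+1 * x * Upoly x s q k /\
  Upoly x (q * s) q k.+1 = x * Upoly x (q * s) q k + q ^+ k.+1 * Tpoly x (s / q) q k.+1 /\
  Tpoly x (s / q) q k.+2 = (x ^+ 2 + s) * Upoly x (q * s) q k + q ^+ k.+1 * x * Tpoly x (s / q) q k.+1.
Proof.
move=> q0; elim: k => [|k [H1 [H2 [H3 H4]]]].
  rewrite /= !expr0 !expr1; split; [ring|split; [ring|split; [ring|]]].
  field; exact: q0.
have -> : Tpoly x s q k.+3 = (1 + q ^+ k.+2) * x * Tpoly x s q k.+2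
   + q ^+ k.+2 * s * Tpoly x s q k.+1 by [].
have -> : Upoly x s q k.+2 = (1 + q ^+ k.+2) * x * Upoly x s q k.+1
   + q ^+ k.+1 * s * Upoly x s q k by [].
have -> : Upoly x (q*s) q k.+2 = (1 + q ^+ k.+2) * x * Upoly x (q*s) q k.+1
   + q ^+ k.+1 * (q*s) * Upoly x (q*s) q k by [].
have -> : Tpoly x (s/q) q k.+3 = (1 + q ^+ k.+2) * x * Tpoly x (s/q) q k.+2
   + q ^+ k.+2 * (s/q) * Tpoly x (s/q) q k.+1 by [].
rewrite H1 H2 H3 H4 !(exprS q (k.+1)).
split; [ring|split; [ring|split; [ring|]]].
field; exact: q0.
Qed.

Local Arguments Tpoly : simpl never.
Local Arguments Upoly : simpl never.

Theorem theorem2p9 (R : realFieldType) (q x s : R) (n : nat) :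
  q != 0 -> q != -1 -> (1 <= n)%N ->
  mx2 (Tpoly x s q n) ((x ^+ 2 + s) * Upoly x (q * s) q n.-1)
      (Upoly x s q n.-1) (Tpoly x (s / q) q n)
  = \prod_(i < n) Amx x s q (n.-1 - i)%N.
Proof.
move=> q0 _; case: n => [//|n] _; rewrite [n.+1.-1]/=.
elim: n => [|n IH].
  rewrite big_ord_recl big_ord0 mulr1 /Amx /=.
  apply/matrixP => i j; rewrite !mxE /= !expr0 !mul1r.
  by case: i => [[|[|//]] ?]; case: j => [[|[|//]] ?] /=; rewrite /Tpoly /Upoly; ring.
rewrite big_ord_recl subn0.
under eq_bigr => i _ do rewrite /= subSS.
rewrite -IH.
have [H1 [H2 [H3 H4]]] := @steps R q x s n q0.
apply/matrixP => i j; rewrite /Amx !mxE !big_ord_recl !big_ord0 !mxE /=.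
case: i => [[|[|//]] ?]; case: j => [[|[|//]] ?] /=.
- rewrite H1; ring.
- rewrite H3; ring.
- rewrite H2; ring.
- rewrite H4; ring.
Qed.
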